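(* Let $X$ be a complex manifold of dimension $n\ge2$, $f$ a holomorphic function with $Z=f^{-1}(0)$ having an isolated singularity at $0$ ($\mathrm{Sing}\,Z=\{0\}$). Let $E_f=\mathrm{Hom}_{\mathcal D_X}(M'_f,B)$ (at the stalk at $0$), and let $-\beta_f$ be the minimal root of the $b$-function of $f$ at $0$. Then for every integer $k>\beta_f-1$, the map $\phi_k:E_f\to B$, $u\mapsto u(f^{-k})$, is injective.
   Context: $M'_f=\mathcal O_X[f^{-1}]$ as a $\mathcal D_X$-module. $B=H^n_{[0]}\mathcal O_X$ is the algebraic local cohomology, identified via Čech cohomology with $\mathbb C[x_1^{-1},\dots,x_n^{-1}]\,(x_1\cdots x_n)^{-1}$ in local coordinates; it is the unique simple regular holonomic $\mathcal D_X$-module supported on $\{0\}$. The $b$-function is the Bernstein–Sato polynomial $b_f(s)$ of $f$ at $0$. *)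

(* Defs.v *)
(* Germs of holomorphic functions at 0 in C^n are modelled
   as convergent power series with coefficients in C := R[i] (R : realType). *)
From HB Require Import structures.
From mathcomp Require Import all_boot all_order all_algebra.
From mathcomp Require Import reals.
From mathcomp Require Import complex.
Set Implicit Arguments. Unset Strict Implicit. Unset Printing Implicit Defensive.
Import Order.TTheory GRing.Theory Num.Theory.
Local Open Scope ring_scope.
Local Open Scope complex_scope.

Section Defs.
Variables (R : realType) (n : nat).
Local Notation C := R[i].

Definition mi := 'I_n -> nat.
Definition series := mi -> C.
Definition mdeg (a : mi) : nat := (\sum_i a i)%N.
Definition maddm (a b : mi) : mi := fun i => (a i + b i)%N.
Definition msubm (a b : mi) : mi := fun i => (a i - b i)%N.
Definition munit (i : 'I_n) : mi := fun j => nat_of_bool (j == i).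
Definition mzero : mi := fun _ => 0%N.
Definition ofbox N (t : {ffun 'I_n -> 'I_N}) : mi := fun i => nat_of_ord (t i).

Definition sum_le (g : mi) (F : mi -> C) : C :=
  \sum_(t : {ffun 'I_n -> 'I_(mdeg g).+1} | [forall i, (t i <= g i)%N]) F (ofbox t).
Definition sum_box (N : nat) (F : mi -> C) : C :=
  \sum_(t : {ffun 'I_n -> 'I_N.+1}) F (ofbox t).

Definition convergent (a : series) : Prop :=
  exists c r : R, 0 < r /\ forall al, `|a al| <= (c * r ^+ mdeg al)%:C.

Definition szero : series := fun _ => 0.
Definition sconst (c : C) : series := fun al => if mdeg al == 0%N then c else 0.
Definition sone : series := sconst 1.
Definition sadd (a b : series) : series := fun al => a al + b al.
Definition sscale (c : C) (a : series) : series := fun al => c * a al.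
Definition smul (a b : series) : series :=
  fun g => sum_le g (fun al => a al * b (msubm g al)).
Definition spow (a : series) (k : nat) : series := iter k (smul a) sone.
Definition sderiv (i : 'I_n) (a : series) : series :=
  fun al => (al i).+1%:R * a (maddm al (munit i)).

Definition psum (a : series) (x : 'I_n -> C) (K : nat) : C :=
  \sum_(t : {ffun 'I_n -> 'I_K.+1} | (mdeg (ofbox t) <= K)%N)
     a (ofbox t) * \prod_i x i ^+ t i.
Definition has_value (a : series) (x : 'I_n -> C) (L : C) : Prop :=
  forall eps : R, 0 < eps -> exists K0, forall K, (K0 <= K)%N ->
    `|psum a x K - L| < eps%:C.

(* Sing Z = {0} for Z = f^{-1}(0): 0 is a critical point of f on Z, and
   near 0 there is no other point of Z where df vanishes *)
Definition isolated_sing (f : series) : Prop :=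
  f mzero = 0 /\ (forall i, sderiv i f mzero = 0) /\
  exists rho : R, 0 < rho /\
    forall x : 'I_n -> C, (forall i, `|x i| < rho%:C) ->
      has_value f x 0 -> (forall i, has_value (sderiv i f) x 0) ->
      x = (fun _ => 0).

Variable f : series.

(* ---- M'_f = O[f^{-1}] : element g / f^k represented by (g, k) ---- *)
Definition loc := (series * nat)%type.
Definition loc_valid (x : loc) : Prop := convergent x.1.
Definition loc_eq (x y : loc) : Prop :=
  smul x.1 (spow f y.2) = smul y.1 (spow f x.2).
Definition loc_add (x y : loc) : loc :=
  (sadd (smul x.1 (spow f y.2)) (smul y.1 (spow f x.2)), (x.2 + y.2)%N).
Definition loc_act (h : series) (x : loc) : loc := (smul h x.1, x.2).
(* d_i (g / f^k) = (f d_i g - k g d_i f) / f^(k+1) *)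
Definition loc_der (i : 'I_n) (x : loc) : loc :=
  (sadd (smul f (sderiv i x.1)) (sscale (- x.2%:R) (smul (sderiv i f) x.1)),
   x.2.+1).
Definition fpow_rep (k : int) : loc :=
  match k with
  | Posz m => (sone, m)
  | Negz m => (spow f m.+1, 0%N)
  end.

(* ---- B = H^n_[0] O_X = C[x^{-1}] (x_1...x_n)^{-1}:
   b : mi -> C finitely supported, b al = coefficient of x^{-(al+1)} ---- *)
Definition bmod := mi -> C.
Definition finsupp (N : nat) (b : bmod) : Prop :=
  forall al, (N < mdeg al)%N -> b al = 0.
Definition badd (b c : bmod) : bmod := fun al => b al + c al.
(* action of h in O (valid whenever N bounds the support of b) *)
Definition B_act (N : nat) (h : series) (b : bmod) : bmod :=
  fun g => sum_box N (fun al => h al * b (maddm g al)).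
(* d_i x^{-(al+1)} = -(al_i+1) x^{-(al+1+e_i)} *)
Definition B_der (i : 'I_n) (b : bmod) : bmod :=
  fun g => if (0 < g i)%N then - (g i)%:R * b (fun j => (g j - (j == i))%N)
           else 0.

(* E_f = Hom_{D_{X,0}}(M'_f, B); D_{X,0} is generated by O_{X,0} and the d_i.
   u is given on representatives and must be compatible with equivalence. *)
Definition is_Ehom (u : loc -> bmod) : Prop :=
  [/\ (forall x, loc_valid x -> exists N, finsupp N (u x)),
      (forall x y, loc_valid x -> loc_valid y -> loc_eq x y -> u x = u y),
      (forall x y, loc_valid x -> loc_valid y ->
          u (loc_add x y) = badd (u x) (u y)),
      (forall h x N, convergent h -> loc_valid x -> finsupp N (u x) ->
          u (loc_act h x) = B_act N h (u x)) &
      (forall i x, loc_valid x -> u (loc_der i x) = B_der i (u x))].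

Definition phi (k : int) (u : loc -> bmod) : bmod := u (fpow_rep k).

(* ---- O[f^{-1}, s] f^s : element (sum_j s^j P_j) f^{-k} f^s rep. by (P, k) ---- *)
Definition nrep := ((nat -> series) * nat)%type.
Definition N_valid (x : nrep) : Prop :=
  (exists J, forall j, (J < j)%N -> x.1 j = szero) /\
  (forall j, convergent (x.1 j)).
Definition N_eq (x y : nrep) : Prop :=
  forall j, smul (x.1 j) (spow f y.2) = smul (y.1 j) (spow f x.2).
Definition N_add (x y : nrep) : nrep :=
  (fun j => sadd (smul (x.1 j) (spow f y.2)) (smul (y.1 j) (spow f x.2)),
   (x.2 + y.2)%N).
Definition N_act (h : series) (x : nrep) : nrep := (fun j => smul h (x.1 j), x.2).
Definition N_s (x : nrep) : nrep :=
  (fun j => if j is j'.+1 then x.1 j' else szero, x.2).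
(* d_i (Q f^{s-k}) = (f d_i Q + (s - k) (d_i f) Q) f^{s-k-1} *)
Definition N_der (i : 'I_n) (x : nrep) : nrep :=
  (fun j => sadd (sadd (smul f (sderiv i (x.1 j)))
                       (sscale (- x.2%:R) (smul (sderiv i f) (x.1 j))))
                 (if j is j'.+1 then smul (sderiv i f) (x.1 j') else szero),
   x.2.+1).

Inductive in_Ds_fs1 : nrep -> Prop :=
| Ds_gen : in_Ds_fs1 (fun j => if j == 0%N then f else szero, 0%N)
| Ds_add x y : in_Ds_fs1 x -> in_Ds_fs1 y -> in_Ds_fs1 (N_add x y)
| Ds_act h x : convergent h -> in_Ds_fs1 x -> in_Ds_fs1 (N_act h x)
| Ds_s x : in_Ds_fs1 x -> in_Ds_fs1 (N_s x)
| Ds_der i x : in_Ds_fs1 x -> in_Ds_fs1 (N_der i x)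
| Ds_eq x y : in_Ds_fs1 x -> N_valid y -> N_eq x y -> in_Ds_fs1 y.

Definition bfs (b : {poly C}) : nrep := (fun j => sconst b`_j, 0%N).

Definition is_bfunction (b : {poly C}) : Prop :=
  [/\ b \is monic, in_Ds_fs1 (bfs b) &
      forall b' : {poly C}, in_Ds_fs1 (bfs b') -> b %| b'].

End Defs.

(* Main.v *)
Require Import Defs.
From HB Require Import structures.
From mathcomp Require Import all_boot all_order all_algebra.
From mathcomp Require Import reals.
From mathcomp Require Import complex.
From mathcomp Require Import boolp.
From mathcomp Require Import ring zify.
Set Implicit Arguments. Unset Strict Implicit. Unset Printing Implicit Defensive.
Import Order.TTheory GRing.Theory Num.Theory.
Local Open Scope ring_scope.

Section S.
Variables (R : realType) (n : nat).
Local Notation C := R[i].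
Local Notation mi := (mi n).
Local Notation series := (series R n).

Definition Bsum N (P : pred mi) (F : mi -> C) : C :=
  \sum_(t : {ffun 'I_n -> 'I_N} | P (ofbox t)) F (ofbox t).

Definition mk M (a : mi) : {ffun 'I_n -> 'I_M.+1} := [ffun i => inord (a i)].

Lemma ofbox_mk M (a : mi) : (forall i, (a i < M.+1)%N) -> ofbox (mk M a) = a.
Proof. by move=> H; apply: funext => i; rewrite /ofbox /mk ffunE inordK. Qed.

Lemma ofbox_inj N : injective (@ofbox n N).
Proof.
move=> t t' E; apply/ffunP => i; apply: val_inj.
exact: (congr1 (fun g => g i) E).
Qed.

Lemma Bsum_bij M M' (P Q : pred mi) (F : mi -> C) (s t : mi -> mi) :
 (forall al, P al -> forall i, (al i < M.+1)%N) ->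
 (forall ga, Q ga -> forall i, (ga i < M'.+1)%N) ->
 (forall al, P al -> Q (s al) /\ t (s al) = al) ->
 (forall ga, Q ga -> P (t ga) /\ s (t ga) = ga) ->
 Bsum M'.+1 Q F = Bsum M.+1 P (fun al => F (s al)).
Proof.
move=> bP bQ hP hQ; rewrite /Bsum.
rewrite (reindex_onto (fun j => mk M' (s (ofbox j))) (fun j => mk M (t (ofbox j)))).
  have EP : forall j : {ffun 'I_n -> 'I_M.+1},
    Q (ofbox (mk M' (s (ofbox j)))) && (mk M (t (ofbox (mk M' (s (ofbox j))))) == j)
    = P (ofbox j).
    move=> j; apply/idP/idP.
      case/andP=> Hq /eqP Hj.
      have := hQ _ Hq => -[Pt _].
      by rewrite -Hj ofbox_mk //; apply: bP.
    move=> Hp; have [Qs ts] := hP _ Hp.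
    rewrite ofbox_mk //; last exact: bQ.
    rewrite Qs /=; apply/eqP; apply: ofbox_inj.
    by rewrite ofbox_mk ts //; apply: bP.
  rewrite (eq_bigl _ _ EP); apply: eq_bigr => j Hp.
  have [Qs ts] := hP _ Hp.
  by rewrite ofbox_mk //; apply: bQ.
move=> j Hq; have [Pt st] := hQ _ Hq.
apply: ofbox_inj; rewrite (ofbox_mk (a := t (ofbox j))); last exact: bP.
by rewrite st ofbox_mk //; apply: bQ.
Qed.

End S.

Section S.
Variables (R : realType) (n : nat).
Local Notation C := R[i].
Local Notation mi := (mi n).
Local Notation series := (series R n).
Local Notation mzero := (@mzero n).

Definition le (g : mi) : pred mi := fun al => [forall i, (al i <= g i)%N].

Lemma lemiP (g al : mi) : reflect (forall i, (al i <= g i)%N) (le g al).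
Proof. exact: forallP. Qed.

Lemma le_mdeg (g : mi) i : (g i <= mdeg g)%N.
Proof. by rewrite /mdeg (bigD1 i) //= leq_addr. Qed.

Lemma le_bound (g al : mi) N : (mdeg g <= N)%N -> le g al -> forall i, (al i < N.+1)%N.
Proof. move=> HN /lemiP H i; have := H i; have := le_mdeg g i; lia. Qed.

Lemma sum_leE (g : mi) (F : mi -> C) : sum_le g F = Bsum (mdeg g).+1 (le g) F.
Proof. by []. Qed.

Lemma sum_le_box (g : mi) N (F : mi -> C) : (mdeg g <= N)%N ->
  sum_le g F = Bsum N.+1 (le g) F.
Proof.
move=> HN; rewrite sum_leE.
rewrite (@Bsum_bij R n N (mdeg g) (le g) (le g) F id id) //.
- by move=> al; apply: le_bound.
- by move=> al; apply: le_bound.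
Qed.

Lemma mi_ext (a b : mi) : (forall i, a i = b i) -> a = b.
Proof. by move=> H; apply: funext. Qed.

Lemma mdeg0 (al : mi) : (mdeg al == 0)%N = (al == mzero).
Proof.
rewrite /mdeg sum_nat_eq0; apply/forallP/eqP.
  by move=> H; apply: mi_ext => i; apply/eqP; apply: (implyP (H i)).
by move=> -> i.
Qed.

Lemma smul1 (a : series) : smul (@sone R n) a = a.
Proof.
apply: funext => g; rewrite /smul sum_leE /Bsum.
have H0 : le g (ofbox (mk (mdeg g) mzero)).
  by rewrite ofbox_mk //; apply/lemiP.
rewrite (bigD1 (mk (mdeg g) mzero)) //= big1 ?addr0.
  rewrite ofbox_mk // /sone /sconst /= (_ : mdeg mzero = 0%N) ?mul1r.
    by congr a; apply: mi_ext => i; rewrite /msubm subn0.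
  by apply/eqP; rewrite mdeg0.
move=> t /andP[_ Ht]; rewrite /sone /sconst mdeg0.
case: eqP => [E|]; last by rewrite mul0r.
by case/eqP: Ht; apply: ofbox_inj; rewrite E ofbox_mk.
Qed.

Lemma smulC (a b : series) : smul a b = smul b a.
Proof.
apply: funext => g; rewrite /smul !sum_leE.
rewrite (@Bsum_bij R n (mdeg g) (mdeg g) (le g) (le g) _ (msubm g) (msubm g)).
- apply: eq_bigr => t /lemiP Ht; rewrite mulrC; congr (_ * _); congr b.
  by apply: mi_ext => i; rewrite /msubm; have := Ht i; lia.
- by move=> al; apply: le_bound.
- by move=> al; apply: le_bound.
- move=> al /lemiP H; split; first by apply/lemiP => i; rewrite /msubm; lia.
  by apply: mi_ext => i; rewrite /msubm; have := H i; lia.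
- move=> al /lemiP H; split; first by apply/lemiP => i; rewrite /msubm; lia.
  by apply: mi_ext => i; rewrite /msubm; have := H i; lia.
Qed.

Lemma smulA (a b c : series) : smul (smul a b) c = smul a (smul b c).
Proof.
apply: funext => g; rewrite /smul !sum_leE /Bsum.
set D := mdeg g.
under eq_bigr => t Ht.
  rewrite (@sum_le_box (ofbox t) D); last first.
    rewrite /mdeg; apply: leq_sum => i _; exact: (lemiP _ _ Ht).
  rewrite /Bsum mulr_suml.
over.
cbv beta.
rewrite (exchange_big_dep (fun t => le g (ofbox t))) /=; last first.
  by move=> t t' /lemiP H1 /lemiP H2; apply/lemiP => i; exact: leq_trans (H2 i) (H1 i).
apply: eq_bigr => t /lemiP Hbe.
rewrite (@sum_le_box _ D); last first.
  by rewrite /mdeg; apply: leq_sum => i _; rewrite /msubm leq_subr.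
rewrite /Bsum mulr_sumr.
pose P := fun al : mi => le g al && le al (ofbox t).
symmetry.
have E := (@Bsum_bij R n D D P (le (msubm g (ofbox t)))
   (fun al => a (ofbox t) * (b al * c (msubm (msubm g (ofbox t)) al)))
   (fun al => msubm al (ofbox t)) (fun al => maddm al (ofbox t))).
rewrite /Bsum in E; rewrite E; clear E.
- apply: eq_bigr => t' /andP[/lemiP H1 /lemiP H2]; rewrite mulrA; congr (_ * _).
  congr c; apply: mi_ext => i; rewrite /msubm; have := H1 i; have := H2 i; lia.
- by move=> al /andP[H _]; apply: le_bound H.
- by move=> al H; apply: le_bound H; rewrite /mdeg; apply: leq_sum => i _; rewrite /msubm leq_subr.
- move=> al /andP[/lemiP H1 /lemiP H2]; split.
    by apply/lemiP => i; rewrite /msubm; have := H1 i; have := H2 i; lia.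
  by apply: mi_ext => i; rewrite /msubm /maddm; have := H2 i; lia.
- move=> al /lemiP H1; split.
    apply/andP; split; apply/lemiP => i; rewrite /maddm; have := H1 i; have := Hbe i;
      rewrite /msubm; lia.
  by apply: mi_ext => i; rewrite /msubm /maddm; lia.
Qed.

End S.

Section S.
Variables (R : realType) (n : nat).
Local Notation C := R[i].
Local Notation mi := (mi n).
Local Notation series := (series R n).

Definition ps := series.
HB.instance Definition _ := Choice.on ps.

Definition sopp (a : series) : series := fun al => - a al.

Lemma saddA : associative (@sadd R n).
Proof. by move=> a b c; apply: funext => g; rewrite /sadd addrA. Qed.
Lemma saddC : commutative (@sadd R n).
Proof. by move=> a b; apply: funext => g; rewrite /sadd addrC. Qed.
Lemma sadd0 : left_id (@szero R n) (@sadd R n).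
Proof. by move=> a; apply: funext => g; rewrite /sadd /szero add0r. Qed.
Lemma saddN : left_inverse (@szero R n) sopp (@sadd R n).
Proof. by move=> a; apply: funext => g; rewrite /sadd /szero /sopp addNr. Qed.

HB.instance Definition _ := GRing.isZmodule.Build ps saddA saddC sadd0 saddN.

Lemma smulDl : left_distributive (@smul R n) (@sadd R n).
Proof.
move=> a b c; apply: funext => g; rewrite /smul /sadd /sum_le -big_split /=.
by apply: eq_bigr => t _; rewrite mulrDl.
Qed.

Lemma sone_neq0 : (@sone R n : ps) != (@szero R n : ps).
Proof.
apply/eqP => /(congr1 (fun a => a (@mzero n))); rewrite /sone /sconst /szero.
rewrite (_ : mdeg _ = 0%N) ?eqxx; first by move/eqP; rewrite oner_eq0.
by apply/eqP; rewrite mdeg0.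
Qed.

Definition smulA' : associative (@smul R n : ps -> ps -> ps) := fun a b c => esym (@smulA R n a b c).
Definition smulC' : commutative (@smul R n : ps -> ps -> ps) := @smulC R n.
Definition smul1' : left_id (@sone R n : ps) (@smul R n : ps -> ps -> ps) := @smul1 R n.
HB.instance Definition _ := GRing.Zmodule_isComNzRing.Build ps
  smulA' smulC' smul1' smulDl sone_neq0.

Lemma smulE (a b : series) : smul a b = (a : ps) * (b : ps). Proof. by []. Qed.
Lemma saddE (a b : series) : sadd a b = (a : ps) + (b : ps). Proof. by []. Qed.
Lemma soneE : @sone R n = (1 : ps). Proof. by []. Qed.
Lemma szeroE : @szero R n = (0 : ps). Proof. by []. Qed.

Lemma test (a b c : ps) : (a + b) * c = c * b + a * c.
Proof. ring. Qed.

End S.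

Section S.
Variables (n : nat).
Local Notation mi := (mi n).

Lemma prod_bool (I : finType) (b : I -> bool) :
  (\prod_i (nat_of_bool (b i)) = nat_of_bool [forall i, b i])%N.
Proof.
case: (boolP [forall i, b i]) => [/forallP H|].
  by rewrite big1 // => i _; rewrite H.
rewrite negb_forall => /existsP [i Hi].
by rewrite (bigD1 i) //= (negbTE Hi) mul0n.
Qed.

Lemma count_le D (g : mi) : (forall i, g i < D)%N ->
  (\sum_(t : {ffun 'I_n -> 'I_D} | le g (ofbox t)) 1 <= 2 ^ mdeg g)%N.
Proof.
move=> HD.
rewrite big_mkcond /=.
rewrite (eq_bigr (fun t : {ffun 'I_n -> 'I_D} => \prod_i nat_of_bool (t i <= g i)%N)); last first.
  by move=> t _; rewrite prod_bool.
rewrite -(bigA_distr_bigA (fun i (j : 'I_D) => nat_of_bool (j <= g i)%N)) /=.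
rewrite /mdeg expn_sum; apply: leq_prod => i _.
have -> : (\sum_(j < D) nat_of_bool (j <= g i) = (g i).+1)%N.
  rewrite -big_mkcond /=.
  rewrite (eq_bigl (fun j : 'I_D => j < (g i).+1)%N) //.
  rewrite -(big_ord_widen _ (fun _ => 1%N)); last exact: HD.
  by rewrite sum_nat_const card_ord muln1.
exact: ltn_expl.
Qed.

End S.

Section S.
Local Open Scope complex_scope.
Variables (R : realType) (n : nat).
Local Notation C := R[i].
Local Notation mi := (mi n).
Local Notation series := (series R n).
Local Notation mzero := (@mzero n).
Implicit Types (a b : series) (k : C).

Definition bnd (a : series) (c r : R) := forall al, `|a al| <= (c * r ^+ mdeg al)%:C.

Lemma mdeg_zero : mdeg mzero = 0%N.
Proof. by apply/eqP; rewrite mdeg0. Qed.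

Lemma bnd_c0 a c r : bnd a c r -> 0 <= c.
Proof.
move=> H; have := H mzero; rewrite mdeg_zero expr0 mulr1 => H'.
by rewrite -ler0c; apply: le_trans H'.
Qed.

Lemma bnd_mono a c r r' : 0 < r -> r <= r' -> bnd a c r -> bnd a c r'.
Proof.
move=> r0 rr H al; apply: le_trans (H al) _; rewrite lecR.
apply: ler_wpM2l; first exact: bnd_c0 H.
apply: lerXn2r => //; rewrite qualifE /= ?ltW //; exact: lt_le_trans r0 rr.
Qed.

Lemma conv_norm a : convergent a -> forall r0, exists c r, [/\ r0 <= r, 0 < r & bnd a c r].
Proof.
move=> [c [r [r0 H]]] r1; exists c, (Num.max r r1); split.
- by rewrite le_max lexx orbT.
- by rewrite lt_max r0.
- apply: bnd_mono H => //; by rewrite le_max lexx.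
Qed.

Lemma conv_add a b : convergent a -> convergent b -> convergent (sadd a b).
Proof.
move=> ca cb; have [c1 [r1 [_ r10 H1]]] := conv_norm ca 0.
have [c2 [r [rr r0 H2]]] := conv_norm cb r1.
have H1' := bnd_mono r10 rr H1.
exists (c1 + c2), r; split => // al; rewrite /sadd.
apply: le_trans (ler_normD _ _) _.
by rewrite mulrDl rmorphD /=; apply: lerD.
Qed.

Lemma normC (k : C) : exists K : R, `|k| = K%:C /\ 0 <= K.
Proof.
exists (complex.Re `|k|); split.
  by rewrite RRe_real // normr_real.
by rewrite -ler0c RRe_real ?normr_real // normr_ge0.
Qed.

Lemma conv_scale k a : convergent a -> convergent (sscale k a).
Proof.
move=> [c [r [r0 H]]]; have [K [EK K0]] := normC k.
exists (K * c), r; split => // al; rewrite /sscale normrM EK -mulrA rmorphM /=.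
by apply: ler_wpM2l; rewrite ?ler0c.
Qed.

Lemma conv_const k : convergent (@sconst R n k).
Proof.
have [K [EK K0]] := normC k.
exists K, 1; split => // al; rewrite expr1n mulr1 /sconst.
by case: eqP => _; rewrite ?EK // normr0 ler0c.
Qed.

Lemma conv_zero : convergent (@szero R n).
Proof. by exists 0, 1; split => // al; rewrite /szero normr0 mul0r. Qed.

Lemma mdeg_sub (g al : mi) : le g al -> (mdeg al + mdeg (msubm g al) = mdeg g)%N.
Proof.
move/lemiP => H; rewrite /mdeg -big_split /=; apply: eq_bigr => i _.
rewrite /msubm; have := H i; lia.
Qed.

Lemma conv_mul a b : convergent a -> convergent b -> convergent (smul a b).
Proof.
move=> ca cb; have [c1 [r1 [_ r10 H1]]] := conv_norm ca 0.
have [c2 [r [rr r0 H2]]] := conv_norm cb r1.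
have H1' := bnd_mono r10 rr H1.
have c10 := bnd_c0 H1; have c20 := bnd_c0 H2.
exists (c1 * c2), (2 * r); split; first by rewrite mulr_gt0.
move=> g; rewrite /smul sum_leE /Bsum.
apply: le_trans (ler_norm_sum _ _ _) _.
pose K := (c1 * c2 * r ^+ mdeg g)%:C.
apply: (@le_trans _ _ (\sum_(t : {ffun 'I_n -> 'I_(mdeg g).+1} | le g (ofbox t)) K)).
  apply: ler_sum => t Ht; rewrite normrM.
  apply: le_trans (ler_pM _ _ (H1' _) (H2 _)) _; rewrite ?normr_ge0 //.
  by rewrite -rmorphM /= mulrACA -exprD mdeg_sub.
rewrite /K -rmorph_sum /= lecR.
rewrite (eq_bigr (fun _ => (1%N)%:R * (c1 * c2 * r ^+ mdeg g))); last by move=> *; rewrite mul1r.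
rewrite -mulr_suml -natr_sum.
rewrite [X in _ <= X](_ : _ = 2 ^+ mdeg g * (c1 * c2 * r ^+ mdeg g)); last by rewrite exprMn; ring.
apply: ler_wpM2r; first by rewrite !mulr_ge0 // exprn_ge0 // ltW.
rewrite -natrX ler_nat; apply: count_le => i.
by rewrite ltnS; apply: le_mdeg.
Qed.

Lemma mdeg_unit (al : mi) (i : 'I_n) : mdeg (maddm al (munit i)) = (mdeg al).+1.
Proof.
have E : (\sum_j munit i j = 1)%N.
  rewrite (bigD1 i) //= /munit eqxx big1 // => j /negbTE ->; done.
by rewrite /mdeg /maddm big_split /= E addn1.
Qed.

Lemma conv_deriv i a : convergent a -> convergent (sderiv i a).
Proof.
move=> ca; have [c [r [_ r0 H]]] := conv_norm ca 0.
have c0 := bnd_c0 H.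
exists (c * r), (2 * r); split; first by rewrite mulr_gt0.
move=> al; rewrite /sderiv normrM normr_nat.
apply: le_trans (ler_wpM2l _ (H _)) _; first by rewrite ler0n.
rewrite mdeg_unit.
have -> : ((al i).+1%:R : C) = ((al i).+1%:R : R)%:C by rewrite rmorph_nat.
rewrite -rmorphM /= lecR.
rewrite (_ : (al i).+1%:R * (c * r ^+ (mdeg al).+1) = (c * r * r ^+ mdeg al) * (al i).+1%:R); last by rewrite exprS; ring.
rewrite [X in _ <= X](_ : _ = (c * r * r ^+ mdeg al) * (2 ^+ mdeg al)); last by rewrite exprMn; ring.
apply: ler_wpM2l; first by rewrite !mulr_ge0 // ?exprn_ge0 // ltW.
rewrite -natrX ler_nat; apply: leq_trans (@ltn_expl 2 (al i) isT) _.
by rewrite leq_exp2l //; apply: le_mdeg.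
Qed.

End S.

Section S.
Variables (R : realType) (n : nat).
Local Notation C := R[i].
Local Notation mi := (mi n).
Local Notation series := (series R n).
Local Notation mzero := (@mzero n).
Local Notation sone := (@sone R n).
Local Notation szero := (@szero R n).
Implicit Types (a b : series) (k : C).

Definition sumc (J : nat) (c : C) (P : nat -> series) : series :=
  fun al => \sum_(j < J) c ^+ j * P j al.

Lemma sumc0 c P : sumc 0 c P = szero.
Proof. by apply: funext => al; rewrite /sumc big_ord0. Qed.

Lemma sumcS J c P : sumc J.+1 c P = sadd (sumc J c P) (sscale (c ^+ J) (P J)).
Proof. by apply: funext => al; rewrite /sumc /sadd /sscale big_ord_recr. Qed.

Lemma conv_sumc J c P : (forall j, convergent (P j)) -> convergent (sumc J c P).
Proof.
move=> H; elim: J => [|J IH]; first by rewrite sumc0; apply: conv_zero.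
by rewrite sumcS; apply: conv_add => //; apply: conv_scale.
Qed.

Lemma sumc_ext J J' c P : (forall j, (J <= j)%N -> P j = szero) -> (J <= J')%N ->
  sumc J' c P = sumc J c P.
Proof.
move=> HP HJ; apply: funext => al; rewrite /sumc.
rewrite [RHS](big_ord_widen J' (fun j => c ^+ j * P j al)) // [RHS]big_mkcond /=.
apply: eq_bigr => j _; case: ifP => // /negbT; rewrite -leqNgt => /HP ->.
by rewrite /szero mulr0.
Qed.

Lemma spowE a (m : nat) : spow a m = (a : ps R n) ^+ m.
Proof. by elim: m => [|m IH] //=; rewrite exprS -IH. Qed.

Lemma conv_spow a (m : nat) : convergent a -> convergent (spow a m).
Proof.
move=> ca; elim: m => [|m IH] /=; first exact: conv_const.
exact: conv_mul.
Qed.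

Lemma smul_sumc_l J c P q : smul (sumc J c P) q = sumc J c (fun j => smul (P j) q).
Proof.
apply: funext => g; rewrite /smul /sumc /sum_le.
under eq_bigr do rewrite mulr_suml.
rewrite exchange_big /=; apply: eq_bigr => j _; rewrite mulr_sumr.
by apply: eq_bigr => t _; rewrite mulrA.
Qed.

Lemma smul_sumc_r J c P q : smul q (sumc J c P) = sumc J c (fun j => smul q (P j)).
Proof.
rewrite smulC smul_sumc_l; apply: funext => g; rewrite /sumc.
by apply: eq_bigr => j _; rewrite smulC.
Qed.

Lemma sumc_add J c A B : sumc J c (fun j => sadd (A j) (B j)) = sadd (sumc J c A) (sumc J c B).
Proof.
by apply: funext => g; rewrite /sumc /sadd -big_split /=; apply: eq_bigr => j _; rewrite mulrDr.
Qed.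

Lemma sumc_scale J c k A : sumc J c (fun j => sscale k (A j)) = sscale k (sumc J c A).
Proof.
apply: funext => g; rewrite /sumc /sscale mulr_sumr; apply: eq_bigr => j _.
by rewrite mulrCA.
Qed.

Lemma sderiv_sumc i J c P : sderiv i (sumc J c P) = sumc J c (fun j => sderiv i (P j)).
Proof.
apply: funext => g; rewrite /sderiv /sumc mulr_sumr; apply: eq_bigr => j _.
by rewrite mulrCA.
Qed.

Lemma sumc_shift J c P :
  sumc J.+1 c (fun j => if j is j'.+1 then P j' else szero) = sscale c (sumc J c P).
Proof.
apply: funext => g; rewrite /sumc /sscale big_ord_recl /= /szero mulr0 add0r mulr_sumr.
by apply: eq_bigr => j _; rewrite exprS /bump /= mulrA.
Qed.

Lemma smul_sconst k a : smul (sconst k) a = sscale k a.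
Proof.
rewrite smulC; apply: funext => g; rewrite /smul sum_leE /Bsum /sscale.
have bg : forall i, (g i < (mdeg g).+1)%N by move=> i; rewrite ltnS le_mdeg.
have H0 : le g (ofbox (mk (mdeg g) g)) by rewrite ofbox_mk //; apply/lemiP.
rewrite (bigD1 (mk (mdeg g) g)) //= big1 ?addr0.
  rewrite ofbox_mk // /sconst.
  rewrite (_ : mdeg (msubm g g) = 0%N) ?eqxx; first by rewrite mulrC.
  by apply/eqP; rewrite mdeg0; apply/eqP; apply: mi_ext => i; rewrite /msubm subnn.
move=> t /andP[/lemiP Hl Ht]; rewrite /sconst mdeg0.
case: eqP => [E|]; last by rewrite mulr0.
case/eqP: Ht; apply: ofbox_inj; rewrite ofbox_mk //.
apply: mi_ext => i; have := congr1 (fun h => h i) E; rewrite /msubm /mzero /= => E'.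
have := Hl i; lia.
Qed.

Lemma sscale_sconst k k' : sscale k (sconst k') = sconst (k * k') :> series.
Proof.
by apply: funext => g; rewrite /sscale /sconst; case: ifP; rewrite ?mulr0.
Qed.

End S.

Section Main.
Variables (R : realType) (n : nat) (f : series R n) (u v : loc R n -> bmod R n).
Hypotheses (cf : convergent f) (Hu : is_Ehom f u) (Hv : is_Ehom f v).
Local Notation C := R[i].
Local Notation mi := (mi n).
Local Notation series := (series R n).
Local Notation sone := (@sone R n).
Local Notation szero := (@szero R n).
Local Notation ps := (ps R n).

Definition spec (e J : nat) (x : nrep R n) : loc R n :=
  (sumc J (- e%:R) x.1, (e + x.2)%N).

Definition supp J (x : nrep R n) := forall j, (J <= j)%N -> x.1 j = szero.

Lemma spec_ext e J J' x : supp J x -> (J <= J')%N -> spec e J' x = spec e J x.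
Proof. by move=> H HJ; rewrite /spec (sumc_ext _ H HJ). Qed.

Lemma valid_spec e J x : N_valid x -> loc_valid (spec e J x).
Proof. by move=> [_ H]; apply: conv_sumc. Qed.

Lemma smul0 a : smul szero a = szero.
Proof. by rewrite smulE szeroE mul0r. Qed.

Lemma transfer_act h z : convergent h -> loc_valid z -> u z = v z ->
  u (loc_act h z) = v (loc_act h z).
Proof.
move=> ch vz E; case: Hu => [Hs _ _ Ha _]; case: Hv => [_ _ _ Ha' _].
have [N HN] := Hs z vz.
by rewrite (Ha h z N) // (Ha' h z N) -?E // E.
Qed.


Definition IP e (x : nrep R n) :=
  N_valid x /\ forall J, supp J x -> u (spec e J x) = v (spec e J x).

Lemma valid_supp x : N_valid x -> exists J, supp J x.
Proof. by case=> [[J HJ] _]; exists J.+1 => j Hj; apply: HJ. Qed.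

Lemma supp_le J J' x : supp J x -> (J <= J')%N -> supp J' x.
Proof. by move=> H HJ j Hj; apply: H; apply: leq_trans Hj. Qed.

Lemma compat_uv a b : loc_valid a -> loc_valid b -> loc_eq f a b -> u a = v a -> u b = v b.
Proof.
move=> va vb E H; case: Hu => [_ Hc _ _ _]; case: Hv => [_ Hc' _ _ _].
by rewrite -(Hc a b) // -(Hc' a b).
Qed.

Lemma sadd00 : sadd szero szero = szero.
Proof. by rewrite saddE szeroE addr0. Qed.

Lemma ring_add (X Y A B E : ps) :
  (X * (E * B) + Y * (E * A)) * (E * (A * B)) = (X * B + Y * A) * (E * A * (E * B)).
Proof. ring. Qed.

Lemma case_add e x y : IP e x -> IP e y -> IP e (N_add f x y).
Proof.
move=> [vx Hx] [vy Hy].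
have [Jx sx] := valid_supp vx; have [Jy sy] := valid_supp vy.
have vxy : N_valid (N_add f x y).
  split.
    exists (maxn Jx Jy) => j Hj /=.
    rewrite sx ?sy ?smul0 ?sadd00 //.
      by apply: leq_trans (ltnW Hj); rewrite leq_maxr.
    by apply: leq_trans (ltnW Hj); rewrite leq_maxl.
  move=> j /=; apply: conv_add; apply: conv_mul; rewrite ?vx.2 ?vy.2 //;
    try exact: conv_spow; [exact: vx.2 | exact: vy.2].
split => // J HJ.
pose M := maxn J (maxn Jx Jy).
have JM : (J <= M)%N by rewrite leq_maxl.
have sxM : supp M x by apply: supp_le sx _; rewrite /M leq_max leq_max leqnn orbT.
have syM : supp M y by apply: supp_le sy _; rewrite /M leq_max leq_max leqnn !orbT.
rewrite -(spec_ext e HJ JM).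
have va : loc_valid (loc_add f (spec e M x) (spec e M y)).
  apply: conv_add; apply: conv_mul; try exact: conv_spow;
  by apply: valid_spec.
apply: (compat_uv va); first exact: valid_spec.
  rewrite /loc_eq /spec /= sumc_add -!smul_sumc_l.
  rewrite !smulE !saddE !spowE !exprD; exact: ring_add.
case: Hu => [_ _ Ha _ _]; case: Hv => [_ _ Ha' _ _].
rewrite Ha ?Ha' ?Hx ?Hy //; exact: valid_spec.
Qed.

Lemma smula0 a : smul a szero = szero.
Proof. by rewrite smulC smul0. Qed.

Lemma sderiv0 i : sderiv i szero = szero.
Proof. by apply: funext => al; rewrite /sderiv /szero mulr0. Qed.

Lemma sscale0 k : sscale k szero = szero.
Proof. by apply: funext => al; rewrite /sscale /szero mulr0. Qed.

Lemma case_act e h x : convergent h -> IP e x -> IP e (N_act h x).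
Proof.
move=> ch [vx Hx]; have [Jx sx] := valid_supp vx.
have vy : N_valid (N_act h x).
  split; last by move=> j /=; apply: conv_mul => //; apply: vx.2.
  by exists Jx => j Hj /=; rewrite sx ?smula0 // ltnW.
split => // J HJ.
pose M := maxn J Jx.
rewrite -(spec_ext e HJ (leq_maxl J Jx)).
have -> : spec e M (N_act h x) = loc_act h (spec e M x).
  by rewrite /spec /loc_act /= smul_sumc_r.
apply: transfer_act => //; first exact: valid_spec.
by apply: Hx; apply: supp_le sx _; rewrite leq_maxr.
Qed.

Lemma case_s e x : IP e x -> IP e (N_s x).
Proof.
move=> [vx Hx]; have [Jx sx] := valid_supp vx.
have vy : N_valid (N_s x).
  split; last by case=> [|j] /=; [exact: conv_zero | exact: vx.2].
  by exists Jx => -[|j] Hj //=; rewrite sx.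
split => // J HJ.
pose M := maxn J Jx.
have JM : (J <= M.+1)%N by apply: leq_trans (leq_maxl J Jx) _.
rewrite -(spec_ext e HJ JM).
have -> : spec e M.+1 (N_s x) = loc_act (sconst (- e%:R)) (spec e M x).
  by rewrite /spec /loc_act /= sumc_shift smul_sconst.
apply: transfer_act; first exact: conv_const.
  exact: valid_spec.
by apply: Hx; apply: supp_le sx _; rewrite leq_maxr.
Qed.

Lemma ring_eq (X Y A B E : ps) : X * B = Y * A -> X * (E * B) = Y * (E * A).
Proof. by move=> H; rewrite mulrCA H mulrCA. Qed.

Lemma case_eq e x y : IP e x -> N_valid y -> N_eq f x y -> IP e y.
Proof.
move=> [vx Hx] vy Exy; split => // J HJ.
have [Jx sx] := valid_supp vx.
pose M := maxn J Jx.
rewrite -(spec_ext e HJ (leq_maxl J Jx)).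
apply: (@compat_uv (spec e M x)); try exact: valid_spec.
  rewrite /loc_eq /spec /= !spowE exprD !exprD.
  apply: ring_eq; rewrite -!spowE -!smulE !smul_sumc_l.
  by congr sumc; apply: funext => j; apply: Exy.
by apply: Hx; apply: supp_le sx _; rewrite leq_maxr.
Qed.

Lemma case_gen e : u (f, e) = v (f, e) ->
  IP e (fun j => if j == 0%N then f else szero, 0%N).
Proof.
move=> Hb; split.
  split; first by exists 0%N => -[|j].
  by move=> j /=; case: (j == 0%N) => //; apply: conv_zero.
move=> J HJ; rewrite -(spec_ext e HJ (leq_maxl J 1)).
have -> : spec e (maxn J 1) (fun j => if j == 0%N then f else szero, 0%N) = (f, e).
  rewrite /spec /= addn0; congr pair.
  have [M ->] : exists M, maxn J 1 = M.+1.
    by exists (maxn J 1).-1; rewrite prednK // leq_max leqnn orbT.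
  apply: funext => al; rewrite /sumc big_ord_recl /= expr0 mul1r big1 ?addr0 //.
  by move=> j _; rewrite /szero mulr0.
exact: Hb.
Qed.

Lemma case_der e i x : IP e x -> IP e (N_der f i x).
Proof.
move=> [vx Hx]; have [Jx sx] := valid_supp vx.
have vy : N_valid (N_der f i x).
  split.
    exists Jx => -[|j] Hj //=.
    by rewrite !sx ?sderiv0 ?smula0 ?sscale0 ?sadd00 // ltnW.
  move=> j /=; apply: conv_add; first apply: conv_add.
  - by apply: conv_mul => //; apply: conv_deriv; apply: vx.2.
  - by apply: conv_scale; apply: conv_mul; [apply: conv_deriv | apply: vx.2].
  - by case: j => [|j]; [exact: conv_zero | apply: conv_mul; [apply: conv_deriv | apply: vx.2]].
split => // J HJ.
pose M := maxn J Jx.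
have JM : (J <= M.+1)%N by apply: leq_trans (leq_maxl J Jx) _.
have sM : supp M x by apply: supp_le sx _; rewrite leq_maxr.
rewrite -(spec_ext e HJ JM).
have -> : spec e M.+1 (N_der f i x) = loc_der f i (spec e M x).
  rewrite /spec /loc_der /= addnS; congr pair.
  rewrite !sumc_add sumc_shift.
  rewrite (@sumc_ext R n M M.+1 _ (fun j => smul f _)); last by []; last first.
    by move=> j Hj; rewrite sM // sderiv0 smula0.
  rewrite (@sumc_ext R n M M.+1 _ (fun j => sscale _ _)); last by []; last first.
    by move=> j Hj; rewrite sM // smula0 sscale0.
  rewrite sumc_scale -!smul_sumc_r -sderiv_sumc.
  apply: funext => al; rewrite /sadd /sscale natrD; ring.
case: Hu => [_ _ _ _ Hd]; case: Hv => [_ _ _ _ Hd'].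
rewrite Hd ?Hd' ?Hx //; exact: valid_spec.
Qed.

Lemma ind e : u (f, e) = v (f, e) -> forall x, in_Ds_fs1 f x -> IP e x.
Proof.
move=> Hb x; elim => {x}.
- exact: case_gen.
- by move=> x y _ Hx _ Hy; apply: case_add.
- by move=> h x ch _ Hx; apply: case_act.
- by move=> x _ Hx; apply: case_s.
- by move=> i x _ Hx; apply: case_der.
- by move=> x y _ Hx vy Exy; apply: case_eq Exy.
Qed.

End Main.

Section Fin.
Variables (R : realType) (n : nat) (f : series R n) (u v : loc R n -> bmod R n).
Hypotheses (cf : convergent f) (Hu : is_Ehom f u) (Hv : is_Ehom f v).
Local Notation C := R[i].
Local Notation mi := (mi n).
Local Notation series := (series R n).
Local Notation sone := (@sone R n).
Local Notation szero := (@szero R n).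

Lemma step (b : {poly C}) e : in_Ds_fs1 f (bfs n b) -> b.[- (e.+1)%:R] != 0 ->
  u (sone, e) = v (sone, e) -> u (sone, e.+1) = v (sone, e.+1).
Proof.
move=> Hbf Hb0 He.
have Hfe : u (f, e.+1) = v (f, e.+1).
  apply: (compat_uv Hu Hv (a := (sone, e))) => //; first exact: conv_const.
  by rewrite /loc_eq /= smul1.
have [_ Hb] := ind cf Hu Hv Hfe Hbf.
have sb : supp (size b) (bfs n b).
  move=> j Hj; rewrite /bfs /= nth_default //.
  by apply: funext => al; rewrite /sconst /szero; case: ifP.
have := Hb _ sb.
have -> : spec (e.+1) (size b) (bfs n b) = (sconst b.[- (e.+1)%:R], e.+1).
  rewrite /spec /= addn0; congr pair; apply: funext => al.
  rewrite /sumc /sconst horner_coef; case: ifP => _.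
    by apply: eq_bigr => j _; rewrite mulrC.
  by rewrite big1 // => j _; rewrite mulr0.
set beta := b.[_] => E.
have -> : (sone, e.+1) = loc_act (sconst beta^-1) (sconst beta, e.+1).
  by rewrite /loc_act /= smul_sconst sscale_sconst mulVf.
apply: (transfer_act Hu Hv); [exact: conv_const | exact: conv_const | exact: E].
Qed.

Lemma ehom_one0 w : is_Ehom f w -> (0 < n)%N -> w (sone, 0%N) = fun _ => 0.
Proof.
move=> [Hs Hc Ha Hact Hd] n0.
pose i := Ordinal n0.
have dsone : sderiv i sone = szero.
  apply: funext => al; rewrite /sderiv /sone /sconst mdeg_unit /szero mulr0 //.
have E1 : loc_der f i (sone, 0%N) = loc_act szero (sone, 1%N).
  rewrite /loc_der /loc_act /=; congr pair.
  rewrite dsone smula0 smul0 (_ : sscale _ _ = szero) ?sadd00 //.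
  by apply: funext => al; rewrite /sscale /szero oppr0 mul0r.
have vone : forall m, loc_valid (sone, m) by move=> m; apply: conv_const.
have := Hd i (sone, 0%N) (vone _).
have [N HN] := Hs _ (vone 1%N).
rewrite E1 (Hact szero (sone, 1%N) N) //; last exact: conv_zero.
have -> : B_act N szero (w (sone, 1%N)) = fun _ => 0.
  by apply: funext => g; rewrite /B_act /sum_box big1 // => t _; rewrite /szero mul0r.
move=> EQ; apply: funext => g.
have := congr1 (fun h => h (maddm g (munit i))) EQ; rewrite /B_der /=.
have -> : (0 < maddm g (munit i) i)%N by rewrite /maddm /munit eqxx addn1.
have -> : (fun j => (maddm g (munit i) j - (j == i))%N) = g.
  by apply: funext => j; rewrite /maddm /munit; case: (j == i) => /=; rewrite ?addn1 ?subn1 ?addn0 ?subn0.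
move=> /esym /eqP; rewrite mulf_eq0 => /orP[|/eqP //].
by rewrite oppr_eq0 pnatr_eq0 /maddm /munit eqxx addn1.
Qed.

Lemma loc_eq_act g m : loc_eq f (loc_act g (sone, m)) (g, m).
Proof. by rewrite /loc_eq /loc_act /= [smul g _]smulC smul1. Qed.

Lemma main_inj (b : {poly C}) (k : int) : (0 < n)%N -> in_Ds_fs1 f (bfs n b) ->
  (forall r : C, root b r -> - r - 1 < k%:~R) ->
  phi f k u = phi f k v -> forall x, loc_valid x -> u x = v x.
Proof.
move=> n0 Hbf Hk Hphi.
have vone : forall m, loc_valid (sone, m) by move=> m; apply: conv_const.
have [K [HK Hr]] : exists K : nat, u (sone, K) = v (sone, K) /\
    forall m, (K <= m)%N -> b.[- (m.+1)%:R] != 0.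
  case: k Hk Hphi => [K|p] Hk Hphi.
    exists K; split; first exact: Hphi.
    move=> m Hm; apply/negP => Hroot.
    have := Hk _ Hroot; rewrite opprK -natr1 addrK.
    rewrite (_ : (Posz K)%:~R = K%:R :> C) ?ltr_nat; last by [].
    by rewrite ltnNge Hm.
  exists 0%N; split; first by rewrite (ehom_one0 Hu) // (ehom_one0 Hv).
  move=> m _; apply/negP => Hroot.
  have := Hk _ Hroot; rewrite opprK -natr1 addrK NegzE mulrNz => H.
  have : (0 : C) <= m%:R by rewrite ler0n.
  have : (- (p.+1%:Z)%:~R : C) < 0 by rewrite oppr_lt0 ltr0z.
  move=> H1 H2; have := lt_trans H (lt_le_trans H1 H2); by rewrite ltxx.
have up : forall m, (K <= m)%N -> u (sone, m) = v (sone, m).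
  elim => [|m IH] Hm; first by move: Hm; rewrite leqn0 => /eqP <-.
  case: (eqVneq K m.+1) => [<- //|neq].
  have Km : (K <= m)%N by move: Hm neq; rewrite leq_eqVlt eq_sym => /orP[->|] //.
  by apply: (step Hbf (Hr _ Km)); apply: IH.
have all : forall m, u (sone, m) = v (sone, m).
  move=> m; case: (leqP K m) => [|/ltnW Hm]; first exact: up.
  have va : loc_valid (loc_act (spow f (K - m)) (sone, K)).
    by apply: conv_mul; [apply: conv_spow | apply: conv_const].
  apply: (compat_uv Hu Hv va) => //.
    rewrite /loc_eq /loc_act /= !spowE !smulE soneE mulr1 mul1r -exprD subnK //.
  apply: (transfer_act Hu Hv) => //; exact: conv_spow.
move=> [g m] vx.
have va : loc_valid (loc_act g (sone, m)) by apply: conv_mul => //; apply: conv_const.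
apply: (compat_uv Hu Hv va) => //; first exact: loc_eq_act.
by apply: (transfer_act Hu Hv) => //.
Qed.

End Fin.

Theorem proposition3p3 (R : realType) (n : nat) (f : series R n) :
  (2 <= n)%N -> convergent f -> isolated_sing f ->
  forall b : {poly R[i]}, is_bfunction f b ->
  forall k : int, (forall r : R[i], root b r -> - r - 1 < k%:~R) ->
  forall u v : loc R n -> bmod R n, is_Ehom f u -> is_Ehom f v ->
  phi f k u = phi f k v ->
  forall x : loc R n, loc_valid x -> u x = v x.
Proof.
move=> n2 cf _ b [_ Hbf _] k Hk u v Hu Hv Hphi.
apply: (main_inj cf Hu Hv _ Hbf Hk Hphi).
by apply: leq_trans n2.
Qed.
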